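(* There exists a constant $C>0$ such that for all $\theta>0$ and all real $\delta$ with $|\delta|\le\theta/3$, \[\Big|f(\theta+\delta)-f(\theta)-\delta f'(\theta)-\frac{\delta^2}{2}f''(\theta)\Big|\le C\,\theta^{-2}|\delta|^3e^{-\theta},\qquad \big|j(\theta+\delta)-j(\theta)-\delta j'(\theta)\big|\le C\,\theta^{-2}\delta^2e^{-\theta}.\]
   Context: Define $\lambda:[0,\infty)\to(0,1/4]$ by $\lambda(0)=1/4$ and, for $\theta>0$, $\lambda(\theta)$ is the unique $\lambda\in(0,1/4)$ with $-1+\frac{\operatorname{artanh}(\sqrt{1-4\lambda})}{\sqrt{1-4\lambda}}=\theta$. For $\theta>0$ set $f(\theta)=-\ln\lambda(\theta)-2\theta-\theta\ln(1-4\lambda(\theta))$ and $j(\theta)=-\tfrac12\ln(1-4(\theta+1)\lambda(\theta))+\tfrac12\ln 2$. *)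

(* Defs.v *)
From Stdlib Require Import Reals ClassicalEpsilon.
From Coquelicot Require Import Coquelicot.
Open Scope R_scope.

Definition artanh (x : R) : R := / 2 * ln ((1 + x) / (1 - x)).

Definition lam_spec (theta l : R) : Prop :=
  0 < l < / 4 /\ -1 + artanh (sqrt (1 - 4 * l)) / sqrt (1 - 4 * l) = theta.

(* lambda(0) = 1/4; for theta > 0 the unique l in (0,1/4) with the relation
   (chosen by Hilbert epsilon; uniqueness is part of the paper's claim).
   Values at theta < 0 are irrelevant. *)
Definition lam (theta : R) : R :=
  match Rle_dec theta 0 with
  | left _ => / 4
  | right _ => epsilon (inhabits 0) (lam_spec theta)
  end.

Definition ff (theta : R) : R :=
  - ln (lam theta) - 2 * theta - theta * ln (1 - 4 * lam theta).

Definition jj (theta : R) : R :=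
  - / 2 * ln (1 - 4 * (theta + 1) * lam theta) + / 2 * ln 2.

(* Main.v *)
Require Import Defs.
From Stdlib Require Import Reals Lra Psatz ClassicalEpsilon Ranalysis5.
From Coquelicot Require Import Coquelicot.
Open Scope R_scope.


Definition sh t := (exp t - exp (- t)) / 2.
Definition ch t := (exp t + exp (- t)) / 2.

Lemma exp_gt1 t : 0 < t -> 1 < exp t.
Proof. intros; generalize (exp_ineq1_le t); lra. Qed.
Lemma exp_ge1 t : 0 <= t -> 1 <= exp t.
Proof. intros; generalize (exp_ineq1_le t); lra. Qed.

Lemma sh_E t : sh t = (exp t - / exp t) / 2.
Proof. unfold sh; now rewrite exp_Ropp. Qed.
Lemma ch_E t : ch t = (exp t + / exp t) / 2.
Proof. unfold ch; now rewrite exp_Ropp. Qed.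

Lemma ch2 t : ch t ^ 2 = 1 + sh t ^ 2.
Proof. rewrite sh_E, ch_E. generalize (exp_pos t); intro. field. lra. Qed.

Lemma sh_ge0 t : 0 <= t -> 0 <= sh t.
Proof. intro. rewrite sh_E. generalize (exp_ge1 t H); intro.
  assert (/ exp t <= 1). { rewrite <- Rinv_1. apply Rinv_le_contravar; lra. } lra. Qed.
Lemma sh_pos t : 0 < t -> 0 < sh t.
Proof. intro. rewrite sh_E. generalize (exp_gt1 t H); intro.
  assert (/ exp t < 1). { rewrite <- Rinv_1. apply Rinv_lt_contravar; lra. } lra. Qed.
Lemma ch_ge1 t : 1 <= ch t.
Proof. rewrite ch_E. generalize (exp_pos t); intro.
  assert (exp t + / exp t - 2 = (exp t - 1)^2 / exp t) by (field; lra).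
  assert (0 <= (exp t - 1)^2 / exp t). { apply Rdiv_le_0_compat; [apply pow2_ge_0|lra]. } lra. Qed.
Lemma ch_pos t : 0 < ch t.
Proof. generalize (ch_ge1 t); lra. Qed.
Lemma sh_le_ch t : sh t <= ch t.
Proof. rewrite sh_E, ch_E. generalize (Rinv_0_lt_compat _ (exp_pos t)); lra. Qed.
Lemma ch_le_E t : ch t <= exp t.
Proof. rewrite ch_E. generalize (exp_pos t); intro. 
  destruct (Rle_dec 0 t).
  - generalize (exp_ge1 t r); intro. assert (/ exp t <= 1). { rewrite <- Rinv_1. apply Rinv_le_contravar; lra. } lra.
  - rewrite <- exp_Ropp. generalize (exp_ineq1_le t). Abort.
Lemma ch_le_E t : 0 <= t -> ch t <= exp t.
Proof. intro H. rewrite ch_E. generalize (exp_pos t); intro.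
  generalize (exp_ge1 t H); intro. assert (/ exp t <= 1). { rewrite <- Rinv_1. apply Rinv_le_contravar; lra. } lra. Qed.
Lemma sh_ge_E t : 1 <= t -> exp t / 4 <= sh t.
Proof. intro H. rewrite sh_E. generalize (exp_ineq1_le t); intro.
  assert (/ exp t <= 1). { rewrite <- Rinv_1. apply Rinv_le_contravar; lra. } lra. Qed.
Lemma sh0 : sh 0 = 0.
Proof. unfold sh. rewrite Ropp_0. lra. Qed.
Lemma ch0 : ch 0 = 1.
Proof. unfold ch. rewrite Ropp_0, exp_0. lra. Qed.

Lemma d_sh t : is_derive sh t (ch t).
Proof. unfold sh, ch. auto_derive; auto. lra. Qed.
Lemma d_ch t : is_derive ch t (sh t).
Proof. unfold sh, ch. auto_derive; auto. lra. Qed.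

Lemma cont_of_der h h' x : is_derive h x (h' x) -> continuity_pt h x.
Proof. intro H. apply continuity_pt_filterlim. apply (ex_derive_continuous (V:=R_NormedModule)). exists (h' x). exact H. Qed.

Lemma incr_der (h h' : R -> R) a b : a <= b ->
  (forall x, a <= x <= b -> is_derive h x (h' x)) ->
  (forall x, a <= x <= b -> 0 <= h' x) -> h a <= h b.
Proof.
  intros Hab Hd Hp.
  destruct (MVT_gen h a b h') as [c [Hc Heq]].
  - intros x; rewrite Rmin_left, Rmax_right by lra. intros; apply Hd; lra.
  - intros x; rewrite Rmin_left, Rmax_right by lra. intros; apply (cont_of_der h h'); apply Hd; lra.
  - rewrite Rmin_left, Rmax_right in Hc by lra.
    assert (0 <= h' c * (b - a)) by (apply Rmult_le_pos; [apply Hp; lra | lra]). lra.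
Qed.

Lemma strict_incr_der (h h' : R -> R) a b : a < b ->
  (forall x, a <= x <= b -> is_derive h x (h' x)) ->
  (forall x, a <= x <= b -> 0 < h' x) -> h a < h b.
Proof.
  intros Hab Hd Hp.
  destruct (MVT_gen h a b h') as [c [Hc Heq]].
  - intros x; rewrite Rmin_left, Rmax_right by lra. intros; apply Hd; lra.
  - intros x; rewrite Rmin_left, Rmax_right by lra. intros; apply (cont_of_der h h'); apply Hd; lra.
  - rewrite Rmin_left, Rmax_right in Hc by lra.
    assert (0 < h' c * (b - a)) by (apply Rmult_lt_0_compat; [apply Hp; lra | lra]). lra.
Qed.

Definition Th t := t * ch t / sh t - 1.
Definition Dd t := sh t * ch t - t.
Definition Nn t := t * ch t - sh t.
Definition Ee t := sh t * ch t - t * (ch t ^ 2 + sh t ^ 2).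

Ltac dsolve := unfold Dd, Nn, Ee, sh, ch; auto_derive; [try exact I; repeat split; auto | match goal with |- ?a = ?b => change (@eq R a b) end; field].
Ltac dsolve1 := unfold Dd, Nn, Ee, sh, ch; auto_derive; match goal with |- ?a = ?b => change (@eq R a b) end; field.

Lemma I1 t : 0 <= t -> t <= sh t.
Proof. intro Ht.
  assert (H := incr_der (fun x => sh x - x) (fun x => ch x - 1) 0 t Ht).
  cbv beta in H. rewrite ?sh0, ?ch0 in H.
  specialize (H ltac:(intros; dsolve) ltac:(intros; generalize (ch_ge1 x); lra)).
  unfold Dd, Nn, Ee in *. simpl in H. rewrite ?sh0, ?ch0 in H. nra.
Qed.

Lemma I2 t : 0 <= t -> sh t <= t * ch t.
Proof. intro Ht.
  assert (H := incr_der (fun x => x * ch x - sh x) (fun x => x * sh x) 0 t Ht).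
  cbv beta in H. rewrite ?sh0, ?ch0 in H.
  specialize (H ltac:(intros; dsolve) ltac:(intros; apply Rmult_le_pos; [lra| apply sh_ge0; lra])).
  unfold Dd, Nn, Ee in *. simpl in H. rewrite ?sh0, ?ch0 in H. nra.
Qed.

Lemma I3 t : 0 <= t -> 2 * t ^ 3 / 3 <= Dd t.
Proof. intro Ht.
  assert (H := incr_der (fun x => Dd x - 2 * x ^ 3 / 3) (fun x => ch x ^ 2 + sh x ^ 2 - 1 - 2 * x ^ 2) 0 t Ht).
  cbv beta in H. rewrite ?sh0, ?ch0 in H.
  specialize (H ltac:(intros; dsolve) ltac:(intros; rewrite ch2; generalize (I1 x ltac:(lra)); intro; nra)).
  unfold Dd, Nn, Ee in *. simpl in H. rewrite ?sh0, ?ch0 in H. nra.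
Qed.

Lemma I4 t : 0 <= t -> Nn t <= t ^ 3 * ch t / 3.
Proof. intro Ht.
  assert (H := incr_der (fun x => x ^ 3 * ch x / 3 - Nn x) (fun x => x ^ 2 * ch x + x ^ 3 * sh x / 3 - x * sh x) 0 t Ht).
  cbv beta in H. rewrite ?sh0, ?ch0 in H.
  specialize (H ltac:(intros; dsolve) ltac:(intros; generalize (I2 x ltac:(lra)) (sh_ge0 x ltac:(lra)); intros;
    assert (0 <= x ^ 3 * sh x / 3) by (apply Rmult_le_pos; [apply Rmult_le_pos|]; [apply pow_le; lra| lra| lra]);
    nra)).
  unfold Dd, Nn, Ee in *. simpl in H. rewrite ?sh0, ?ch0 in H. nra.
Qed.

Lemma I4b t : 0 <= t -> t ^ 3 / 3 <= Nn t.
Proof. intro Ht.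
  assert (H := incr_der (fun x => Nn x - x ^ 3 / 3) (fun x => x * sh x - x ^ 2) 0 t Ht).
  cbv beta in H. rewrite ?sh0, ?ch0 in H.
  specialize (H ltac:(intros; dsolve) ltac:(intros; generalize (I1 x ltac:(lra)); intros; nra)).
  unfold Dd, Nn, Ee in *. simpl in H. rewrite ?sh0, ?ch0 in H. nra.
Qed.

Lemma I5 t : 0 <= t <= 1 -> ch t <= 3.
Proof. intro Ht. generalize (ch_le_E t ltac:(lra)) exp_le_3; intros.
  assert (exp t <= exp 1). { destruct (Req_dec t 1). subst; lra. left; apply exp_increasing; lra. } lra. Qed.

Lemma I6 t : 0 <= t <= 1 -> Dd t <= 6 * t ^ 3.
Proof. intro Ht.
  assert (H := incr_der (fun x => 6 * x ^ 3 - Dd x) (fun x => 18 * x ^ 2 - (ch x ^ 2 + sh x ^ 2 - 1)) 0 t ltac:(lra)).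
  cbv beta in H. rewrite ?sh0, ?ch0 in H.
  specialize (H ltac:(intros; dsolve) ltac:(intros; rewrite ch2; generalize (I2 x ltac:(lra)) (sh_ge0 x ltac:(lra)) (I5 x ltac:(lra)); intros; assert (sh x <= 3 * x) by nra; nra)).
  unfold Dd, Nn, Ee in *. simpl in H. rewrite ?sh0, ?ch0 in H. nra.
Qed.

Lemma I7 t : 0 <= t -> Ee t <= 0.
Proof. intro Ht.
  assert (H := incr_der (fun x => - Ee x) (fun x => 4 * x * sh x * ch x) 0 t Ht).
  cbv beta in H. rewrite ?sh0, ?ch0 in H.
  specialize (H ltac:(intros; dsolve) ltac:(intros; generalize (sh_ge0 x ltac:(lra)) (ch_pos x); intros;
    apply Rmult_le_pos; [apply Rmult_le_pos|]; lra)).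
  unfold Dd, Nn, Ee in *. simpl in H. rewrite ?sh0, ?ch0 in H. nra.
Qed.

Lemma I8 t : 0 <= t <= 1 -> - Ee t <= 12 * t ^ 3.
Proof. intro Ht.
  assert (H := incr_der (fun x => 12 * x ^ 3 + Ee x) (fun x => 36 * x ^ 2 - 4 * x * sh x * ch x) 0 t ltac:(lra)).
  cbv beta in H. rewrite ?sh0, ?ch0 in H.
  specialize (H ltac:(intros; dsolve) ltac:(intros; generalize (I2 x ltac:(lra)) (sh_ge0 x ltac:(lra)) (I5 x ltac:(lra)) (ch_pos x); intros;
    assert (sh x <= 3 * x) by nra; assert (sh x * ch x <= 3 * x * 3) by nra; nra)).
  unfold Dd, Nn, Ee in *. simpl in H. rewrite ?sh0, ?ch0 in H. nra.
Qed.

Lemma I9 t : 0 <= t -> - Ee t <= 2 * t * ch t ^ 2.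
Proof. intro Ht. unfold Ee. generalize (sh_ge0 t Ht) (sh_le_ch t) (ch_pos t); intros.
  assert (sh t ^ 2 <= ch t ^ 2) by nra. assert (t * sh t ^ 2 <= t * ch t ^ 2) by (apply Rmult_le_compat_l; lra).
  assert (0 <= sh t * ch t) by nra. nra. Qed.

Lemma Dd_pos t : 0 < t -> 0 < Dd t.
Proof. intro. generalize (I3 t ltac:(lra)); intro. assert (0 < t ^ 3) by (apply pow_lt; lra). lra. Qed.
Lemma Nn_pos t : 0 < t -> 0 < Nn t.
Proof. intro. generalize (I4b t ltac:(lra)); intro. assert (0 < t ^ 3) by (apply pow_lt; lra). lra. Qed.

Lemma I10 t : 1 <= t -> 2 * sh t * ch t / 5 <= Dd t.
Proof. intro. generalize (I3 t ltac:(lra)); intro. unfold Dd in *.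
  assert (t <= t ^ 3) by nra. lra. Qed.

Lemma Th_Nn t : 0 < t -> Th t = Nn t / sh t.
Proof. intro. unfold Th, Nn. generalize (sh_pos t H); intro. field. lra. Qed.

Lemma Th_pos t : 0 < t -> 0 < Th t.
Proof. intro. rewrite Th_Nn by auto. apply Rdiv_lt_0_compat; [apply Nn_pos | apply sh_pos]; auto. Qed.

Lemma Th_le t : 0 < t -> Th t <= t.
Proof. intro. rewrite Th_Nn by auto. unfold Nn. generalize (sh_pos t H); intro.
  assert (t * ch t - sh t <= t * sh t).
  { assert (ch t - sh t = / exp t) by (rewrite ch_E, sh_E; field; generalize (exp_pos t); lra).
    generalize (exp_gt1 t H) (I1 t ltac:(lra)); intros.
    assert (/ exp t <= 1). { rewrite <- Rinv_1. apply Rinv_le_contravar; lra. }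
    assert (t * / exp t <= t) by nra.
    assert (t * (ch t - sh t) <= sh t) by (rewrite H1; lra). nra. }
  apply Rmult_le_reg_r with (sh t); auto. unfold Rdiv. rewrite Rmult_assoc, Rinv_l by lra. lra.
Qed.

Lemma Th_ge t : 0 < t -> t - 1 <= Th t.
Proof. intro. unfold Th. generalize (sh_pos t H) (sh_le_ch t); intros.
  assert (t <= t * ch t / sh t); [|lra].
  apply Rmult_le_reg_r with (sh t); auto. unfold Rdiv. rewrite Rmult_assoc, Rinv_l by lra. nra. Qed.

Ltac Req := match goal with |- ?a = ?b => change (@eq R a b) end.

Lemma d_Th t : 0 < t -> is_derive Th t (Dd t / sh t ^ 2).
Proof. intro Ht. generalize (sh_pos t Ht); intro Hs.
  unfold Th, Dd, sh, ch. auto_derive.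
  - intro. unfold sh in Hs; lra.
  - Req. rewrite ?exp_Ropp. generalize (exp_gt1 t Ht); intro.
    field. split; [lra | nra].
Qed.

Lemma Th_lt a b : 0 < a -> a < b -> Th a < Th b.
Proof. intros Ha Hab.
  apply (strict_incr_der Th (fun t => Dd t / sh t ^ 2) a b Hab).
  - intros; apply d_Th; lra.
  - intros. apply Rdiv_lt_0_compat. apply Dd_pos; lra. apply pow_lt, sh_pos; lra.
Qed.

Lemma Th_inj a b : 0 < a -> 0 < b -> Th a = Th b -> a = b.
Proof. intros Ha Hb H. destruct (Rtotal_order a b) as [H1|[H1|H1]]; auto.
  - generalize (Th_lt a b Ha H1); lra.
  - generalize (Th_lt b a Hb H1); lra.
Qed.

Lemma Th_cont t : 0 < t -> continuity_pt Th t.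
Proof. intro. apply (cont_of_der Th (fun t => Dd t / sh t ^ 2)). now apply d_Th. Qed.

Lemma Th_surj y : 0 < y -> exists t, 0 < t /\ Th t = y.
Proof. intro Hy.
  destruct (IVT_interv (fun t => Th t - y) (y / 2) (y + 2)) as [t [Ht Heq]].
  - intros a Ha. apply continuity_pt_minus. apply Th_cont; lra. apply continuity_pt_const. intros u v; auto.
  - lra.
  - generalize (Th_le (y/2) ltac:(lra)); lra.
  - generalize (Th_ge (y+2) ltac:(lra)); lra.
  - exists t; split; lra.
Qed.

Definition L t := / (4 * ch t ^ 2).

Lemma ch2_gt1 t : 0 < t -> 1 < ch t ^ 2.
Proof. intro. rewrite ch2. generalize (sh_pos t H); intro. nra. Qed.

Lemma artanh_tanh t : artanh (sh t / ch t) = t.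
Proof. unfold artanh. generalize (exp_pos t); intro.
  replace ((1 + sh t / ch t) / (1 - sh t / ch t)) with (exp (t + t)).
  - rewrite ln_exp. field.
  - rewrite exp_plus, sh_E, ch_E. field. split. intro. 
    lra. split; nra.
Qed.

Lemma lam_spec_L t : 0 < t -> lam_spec (Th t) (L t).
Proof. intro Ht. generalize (ch2_gt1 t Ht) (ch_pos t) (sh_pos t Ht); intros H1 H2 H3.
  unfold lam_spec, L. split.
  - split. apply Rinv_0_lt_compat; lra.
    apply Rinv_lt_contravar; nra.
  - replace (1 - 4 * / (4 * ch t ^ 2)) with ((sh t / ch t) ^ 2).
    + rewrite sqrt_pow2. rewrite artanh_tanh. unfold Th. field. split; lra.
      apply Rdiv_le_0_compat; lra.
    + replace ((sh t / ch t)^2) with (sh t ^ 2 / ch t ^ 2) by (field; lra). replace (sh t ^ 2) with (ch t ^ 2 - 1) by (rewrite ch2; ring). field. lra.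
Qed.

Lemma lam_pos_spec y : 0 < y -> lam_spec y (lam y).
Proof. intro Hy. unfold lam. destruct (Rle_dec y 0). lra.
  apply epsilon_spec. destruct (Th_surj y Hy) as [t [Ht Heq]]. exists (L t). rewrite <- Heq. now apply lam_spec_L.
Qed.

Definition T y := artanh (sqrt (1 - 4 * lam y)).

Lemma tanh_artanh s : 0 < s < 1 -> sh (artanh s) / ch (artanh s) = s.
Proof. intro Hs. unfold artanh. set (q := (1 + s) / (1 - s)).
  assert (Hq : 0 < q) by (apply Rdiv_lt_0_compat; lra).
  set (E := exp (/ 2 * ln q)).
  assert (HE : E * E = q). { unfold E. rewrite <- exp_plus. replace (/2 * ln q + /2 * ln q) with (ln q) by field. apply exp_ln; auto. }
  assert (0 < E) by apply exp_pos.
  rewrite sh_E, ch_E. fold E.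
  replace ((E - / E) / 2 / ((E + / E) / 2)) with ((E * E - 1) / (E * E + 1)) by (field; split; nra).
  rewrite HE. unfold q. field. lra.
Qed.

Lemma T_facts y : 0 < y -> 0 < T y /\ Th (T y) = y /\ lam y = L (T y).
Proof. intro Hy. destruct (lam_pos_spec y Hy) as [[Hl1 Hl2] Heq].
  set (s := sqrt (1 - 4 * lam y)) in *.
  assert (Hs2 : s * s = 1 - 4 * lam y) by (apply sqrt_sqrt; lra).
  assert (Hs0 : 0 < s) by (apply sqrt_lt_R0; lra).
  assert (Hs1 : s < 1). { assert (s * s < 1) by lra. nra. }
  assert (Htan := tanh_artanh s (conj Hs0 Hs1)).
  assert (HT : T y = artanh s) by reflexivity. rewrite HT. set (t := artanh s) in *.
  generalize (ch_pos t); intro Hc.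
  assert (Ht : 0 < t).
  { unfold t, artanh. apply Rmult_lt_0_compat. lra. rewrite <- ln_1. apply ln_increasing. lra.
    apply Rmult_lt_reg_r with (1 - s). lra. unfold Rdiv. rewrite Rmult_assoc, Rinv_l by lra. lra. }
  split; [auto|split].
  - rewrite <- Heq. unfold Th. rewrite <- Htan. field. split. lra. generalize (sh_pos t Ht); lra.
  - unfold L. assert (sh t = s * ch t) by (rewrite <- Htan; field; lra).
    generalize (ch2 t); intro. rewrite H in H0.
    assert (ch t ^ 2 * (1 - s * s) = 1) by nra. rewrite Hs2 in H1.
    apply (Rmult_eq_reg_l (4 * ch t ^ 2)). rewrite Rinv_r by nra. nra. nra.
Qed.

Lemma T_pos y : 0 < y -> 0 < T y. Proof. apply T_facts. Qed.
Lemma ThT y : 0 < y -> Th (T y) = y. Proof. apply T_facts. Qed.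
Lemma lamT y : 0 < y -> lam y = L (T y). Proof. apply T_facts. Qed.
Lemma TTh t : 0 < t -> T (Th t) = t.
Proof. intro. apply Th_inj; auto. apply T_pos, Th_pos; auto. apply ThT, Th_pos; auto. Qed.

Lemma T_le a b : 0 < a -> a <= b -> T a <= T b.
Proof. intros. destruct (Rle_dec (T a) (T b)); auto.
  assert (Th (T b) < Th (T a)) by (apply Th_lt; [apply T_pos; lra | lra]).
  rewrite !ThT in H1; lra.
Qed.
Lemma T_ge y : 0 < y -> y <= T y.
Proof. intro. generalize (Th_le (T y) (T_pos y H)). rewrite ThT; auto. Qed.


Lemma T_cont y : 0 < y -> continuity_pt T y.
Proof. intro Hy. generalize (T_pos y Hy); intro Ht.
  set (lb := T y / 2). set (ub := T y + 1).
  assert (Hlb : 0 < lb) by (unfold lb; lra).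
  apply (continuity_pt_recip_interv Th T lb ub).
  - unfold lb, ub; lra.
  - intros. apply Th_lt; lra.
  - intros. unfold comp, id. apply ThT. generalize (Th_pos lb Hlb); lra.
  - intros. generalize (Th_pos lb Hlb); intro.
    split.
    + rewrite <- (TTh lb Hlb). apply T_le; lra.
    + rewrite <- (TTh ub ltac:(unfold ub; lra)). apply T_le; lra.
  - intros; apply Th_cont; lra.
  - rewrite <- (ThT y Hy). split; apply Th_lt; unfold lb, ub; lra.
Qed.

Lemma d_T y : 0 < y -> is_derive T y (sh (T y) ^ 2 / Dd (T y)).
Proof. intro Hy.
  assert (Prf : forall a, T (y/2) <= a <= T (2*y) -> derivable_pt Th a).
  { intros a Ha. apply ex_derive_Reals_0. generalize (T_pos (y/2) ltac:(lra)); intro.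
    exists (Dd a / sh a ^ 2). apply d_Th. lra. }
  assert (Hinc : T (y/2) <= T y <= T (2*y)) by (split; apply T_le; lra).
  assert (HD : forall pr, derive_pt Th (T y) pr = Dd (T y) / sh (T y) ^ 2).
  { intro. apply derive_pt_eq_0. apply is_derive_Reals. apply d_Th, T_pos; auto. }
  generalize (T_pos y Hy); intro Ht.
  generalize (Dd_pos _ Ht) (sh_pos _ Ht); intros H1 H2.
  assert (H := derivable_pt_lim_recip_interv Th T (y/2) (2*y) y Prf (T_cont y Hy) ltac:(lra) ltac:(lra) Hinc).
  rewrite HD in H.
  apply is_derive_Reals.
  replace (sh (T y) ^ 2 / Dd (T y)) with (1 / (Dd (T y) / sh (T y) ^ 2)) by (field; lra).
  apply H.
  - intros. unfold comp, id. apply ThT. lra.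
  - apply Rgt_not_eq. apply Rdiv_lt_0_compat; auto. apply pow_lt; auto.
Qed.


Definition G1 t := - ln (1 - 4 * L t).
Definition G2 t := - 2 * sh t / (ch t * Dd t).
Definition G3 t := - 2 * sh t ^ 2 * (Dd t - 2 * sh t ^ 3 * ch t) / (ch t ^ 2 * Dd t ^ 3).
Definition J1 t := sh t * Ee t / (2 * ch t * Dd t ^ 2).
Definition J2 t := sh t ^ 2 * Ee t / (2 * ch t ^ 2 * Dd t ^ 3) - 2 * t * sh t ^ 4 / Dd t ^ 3
   - 2 * sh t ^ 5 * Ee t / (ch t * Dd t ^ 4).

Lemma loc_pos y : 0 < y -> locally y (fun x => 0 < x).
Proof. intro. apply (open_gt 0 y H). Qed.

Lemma exT y : 0 < y -> ex_derive T y.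
Proof. intro. eexists. apply d_T; auto. Qed.

Lemma DT y : 0 < y -> Derive (fun x => T x) y = sh (T y) ^ 2 / Dd (T y).
Proof. intro. apply is_derive_unique. apply d_T; auto. Qed.

Lemma L_lt t : 0 < t -> 0 < 1 - 4 * L t.
Proof. intro. unfold L. generalize (ch2_gt1 t H) (ch_pos t); intros.
  assert (4 * / (4 * ch t ^ 2) < 1); [|lra].
  replace (4 * / (4 * ch t ^ 2)) with (/ ch t ^ 2) by (field; lra).
  rewrite <- Rinv_1. apply Rinv_lt_contravar; lra. Qed.
Lemma L_pos t : 0 < L t.
Proof. unfold L. apply Rinv_0_lt_compat. generalize (ch_pos t); nra. Qed.

Lemma exch t : ex_derive ch t. Proof. eexists; apply d_ch. Qed.
Lemma exsh t : ex_derive sh t. Proof. eexists; apply d_sh. Qed.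
Lemma Dch t : Derive (fun x => ch x) t = sh t. Proof. apply is_derive_unique, d_ch. Qed.
Lemma Dsh t : Derive (fun x => sh x) t = ch t. Proof. apply is_derive_unique, d_sh. Qed.

Lemma DdE t : 0 < t -> 0 < exp t ^ 4 - 1 - 4 * t * exp t ^ 2.
Proof. intro. generalize (Dd_pos t H) (exp_pos t); unfold Dd; rewrite sh_E, ch_E; intros.
  replace (exp t ^ 4 - 1 - 4 * t * exp t ^ 2) with (4 * exp t ^ 2 * ((exp t - / exp t) / 2 * ((exp t + / exp t) / 2) - t)) by (field; lra).
  apply Rmult_lt_0_compat; auto. nra. Qed.

Ltac Econd t Ht := generalize (exp_gt1 t Ht) (DdE t Ht); intros;
  repeat split; intro Hc; nra.

Ltac pos := repeat match goal with |- 0 < ?a * ?b => apply (Rmult_lt_0_compat a b) end; lra.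
Ltac side := repeat split; try assumption; try exact I; try (apply Rgt_not_eq; unfold Rgt; pos); try (simpl; nra).

Ltac gen_t y Hy := rewrite (DT y Hy); try unfold sinh; try fold (sh (T y)); try unfold cosh; try fold (ch (T y));
  generalize (T_pos y Hy) (ThT y Hy); generalize (T y); intros t Ht Hty; subst y.

Lemma d_ff0 y : 0 < y -> is_derive (fun x => - ln (L (T x)) - 2 * x - x * ln (1 - 4 * L (T x))) y (G1 (T y)).
Proof. intro Hy. generalize (exT y Hy) (L_pos (T y)) (L_lt (T y) (T_pos y Hy)) (ch_pos (T y)); intros H1 H2 H3 H4.
  unfold L in H2, H3.
  unfold L. auto_derive.
  - side.
  - match goal with |- context [ln ?a] => replace (ln a) with (ln (1 - 4 * L (T y))) by (f_equal; unfold L; Req; field; lra) end.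
    unfold G1. gen_t y Hy. generalize (sh_pos t Ht); intro.
    unfold Th, Dd, L. rewrite ?sh_E, ?ch_E in *. Req. field. Econd t Ht.
Qed.

Lemma d_G1T y : 0 < y -> is_derive (fun x => G1 (T x)) y (G2 (T y)).
Proof. intro Hy. generalize (exT y Hy) (L_pos (T y)) (L_lt (T y) (T_pos y Hy)) (ch_pos (T y)); intros H1 H2 H3 H4.
  unfold L in H2, H3.
  unfold G1, L. auto_derive.
  - side.
  - gen_t y Hy. unfold G2, Th, Dd. rewrite ?sh_E, ?ch_E in *. Req. field. Econd t Ht.
Qed.

Lemma d_G2T y : 0 < y -> is_derive (fun x => G2 (T x)) y (G3 (T y)).
Proof. intro Hy. generalize (exT y Hy) (Dd_pos (T y) (T_pos y Hy)) (ch_pos (T y)); intros H1 H2 H4.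
  unfold Dd in H2.
  unfold G2, Dd. auto_derive.
  - side.
  - gen_t y Hy. unfold G3, Th, Dd. rewrite ?sh_E, ?ch_E in *. Req. field. Econd t Ht.
Qed.

Lemma d_ff y : 0 < y -> is_derive ff y (G1 (T y)).
Proof. intro Hy. apply is_derive_ext_loc with (f := fun x => - ln (L (T x)) - 2 * x - x * ln (1 - 4 * L (T x))).
  - apply (filter_imp (fun x => 0 < x)); [|apply loc_pos; auto]. intros x Hx. unfold ff. rewrite lamT; auto.
  - apply d_ff0; auto.
Qed.

Lemma Dff y : 0 < y -> Derive ff y = G1 (T y).
Proof. intro. apply is_derive_unique, d_ff; auto. Qed.

Lemma d_Dff y : 0 < y -> is_derive (Derive ff) y (G2 (T y)).
Proof. intro Hy. apply is_derive_ext_loc with (f := fun x => G1 (T x)).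
  - apply (filter_imp (fun x => 0 < x)); [|apply loc_pos; auto]. intros x Hx. rewrite Dff; auto.
  - apply d_G1T; auto.
Qed.

Lemma DDff y : 0 < y -> Derive (Derive ff) y = G2 (T y).
Proof. intro. apply is_derive_unique, d_Dff; auto. Qed.

Lemma d_DDff y : 0 < y -> is_derive (Derive (Derive ff)) y (G3 (T y)).
Proof. intro Hy. apply is_derive_ext_loc with (f := fun x => G2 (T x)).
  - apply (filter_imp (fun x => 0 < x)); [|apply loc_pos; auto]. intros x Hx. rewrite DDff; auto.
  - apply d_G2T; auto.
Qed.

Lemma jj_arg_pos t : 0 < t -> 0 < 1 - 4 * (Th t + 1) * L t.
Proof. intro Ht. generalize (sh_pos t Ht) (ch_pos t) (Dd_pos t Ht); intros.
  replace (1 - 4 * (Th t + 1) * L t) with (Dd t / (sh t * ch t)).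
  - apply Rdiv_lt_0_compat; nra.
  - unfold Th, L, Dd. field. lra.
Qed.

Lemma d_jj0 y : 0 < y -> is_derive (fun x => - / 2 * ln (1 - 4 * (x + 1) * L (T x)) + / 2 * ln 2) y (J1 (T y)).
Proof. intro Hy. generalize (exT y Hy) (jj_arg_pos (T y) (T_pos y Hy)) (ch_pos (T y)); intros H1 H2 H4.
  rewrite ThT in H2 by auto. unfold L in H2.
  unfold L. auto_derive.
  - side.
  - gen_t y Hy. unfold J1, Ee, Th, Dd. rewrite ?sh_E, ?ch_E in *. Req. field. Econd t Ht.
Qed.

Lemma d_J1T y : 0 < y -> is_derive (fun x => J1 (T x)) y (J2 (T y)).
Proof. intro Hy. generalize (exT y Hy) (Dd_pos (T y) (T_pos y Hy)) (ch_pos (T y)); intros H1 H2 H4.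
  unfold Dd in H2.
  unfold J1, Ee, Dd. auto_derive.
  - side.
  - gen_t y Hy. unfold J2, Ee, Th, Dd. rewrite ?sh_E, ?ch_E in *. Req. field. Econd t Ht.
Qed.

Lemma d_jj y : 0 < y -> is_derive jj y (J1 (T y)).
Proof. intro Hy. apply is_derive_ext_loc with (f := fun x => - / 2 * ln (1 - 4 * (x + 1) * L (T x)) + / 2 * ln 2).
  - apply (filter_imp (fun x => 0 < x)); [|apply loc_pos; auto]. intros x Hx. unfold jj. rewrite lamT; auto.
  - apply d_jj0; auto.
Qed.

Lemma Djj y : 0 < y -> Derive jj y = J1 (T y).
Proof. intro. apply is_derive_unique, d_jj; auto. Qed.

Lemma d_Djj y : 0 < y -> is_derive (Derive jj) y (J2 (T y)).
Proof. intro Hy. apply is_derive_ext_loc with (f := fun x => J1 (T x)).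
  - apply (filter_imp (fun x => 0 < x)); [|apply loc_pos; auto]. intros x Hx. rewrite Djj; auto.
  - apply d_J1T; auto.
Qed.

Lemma frac_le X X' Y Y' : 0 <= X <= X' -> 0 < Y' <= Y -> X / Y <= X' / Y'.
Proof. intros [H1 H2] [H3 H4]. unfold Rdiv.
  apply Rmult_le_compat; auto. left; apply Rinv_0_lt_compat; lra.
  apply Rinv_le_contravar; lra. Qed.

Lemma mle a a' b b' : 0 <= a <= a' -> 0 <= b <= b' -> a * b <= a' * b'.
Proof. intros. apply Rmult_le_compat; lra. Qed.

Lemma ple a a' n : 0 <= a <= a' -> a ^ n <= a' ^ n.
Proof. intros. apply pow_incr; auto. Qed.

Lemma exp_small t : t <= 1 -> exp (3 * t / 2) <= 9.
Proof. intro. assert (exp (3 * t / 2) <= exp (1 + 1)).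
  { destruct (Req_dec (3*t/2) (1+1)). rewrite H0; lra. left; apply exp_increasing; lra. }
  rewrite exp_plus in H0. generalize exp_le_3 (exp_pos 1); intros. nra. Qed.

Lemma t3_exp t : 1 <= t -> t ^ 3 <= 4096 * exp (t / 2).
Proof. intro. assert (exp (t / 2) = exp (t / 8) ^ 4).
  { replace (t / 2) with (t/8 + t/8 + t/8 + t/8) by field. rewrite !exp_plus. ring. }
  rewrite H0. generalize (exp_ineq1_le (t / 8)); intro.
  assert ((t / 8) ^ 4 <= exp (t / 8) ^ 4) by (apply pow_incr; lra).
  assert (t ^ 3 <= t ^ 4) by (simpl; nra). nra. Qed.

Lemma large_fin t : 1 <= t -> t ^ 3 / ch t ^ 2 * exp (3 * t / 2) <= 16384.
Proof. intro. generalize (ch_le_E t ltac:(lra)); intro.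
  assert (exp t / 2 <= ch t) by (rewrite ch_E; generalize (Rinv_0_lt_compat _ (exp_pos t)); lra).
  generalize (exp_pos t) (exp_pos (t/2)) (t3_exp t H); intros.
  assert (exp (3 * t / 2) = exp t * exp t / exp (t / 2)).
  { replace (3*t/2) with (t + t + -(t/2)) by field. rewrite !exp_plus, exp_Ropp. unfold Rdiv. ring. }
  rewrite H5.
  assert (0 < t ^ 3) by (apply pow_lt; lra).
  apply Rle_trans with (t ^ 3 / (exp t * exp t / 4) * (exp t * exp t / exp (t / 2))).
  - apply Rmult_le_compat_r. apply Rmult_le_pos; [nra|left; apply Rinv_0_lt_compat; lra].
    apply frac_le. lra. split. nra. nra.
  - replace (t ^ 3 / (exp t * exp t / 4) * (exp t * exp t / exp (t / 2))) with (4 * (t ^ 3 / exp (t/2))) by (field; lra).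
    assert (t ^ 3 / exp (t/2) <= 4096). { apply Rmult_le_reg_r with (exp (t/2)); auto. unfold Rdiv. rewrite Rmult_assoc, Rinv_l by lra. lra. }
    lra.
Qed.

Lemma sh_half_ch t : 1 <= t -> ch t / 2 <= sh t.
Proof. intro. rewrite sh_E, ch_E. generalize (exp_ineq1_le t) (exp_pos t); intros.
  assert (/ exp t <= 1/2). { replace (1/2) with (/2) by field. apply Rinv_le_contravar; lra. } lra. Qed.

Lemma sh_le3t t : 0 <= t <= 1 -> sh t <= 3 * t.
Proof. intro. generalize (I2 t ltac:(lra)) (I5 t H); intros. nra. Qed.
Lemma Nn_le t : 0 <= t <= 1 -> Nn t <= t ^ 3.
Proof. intro. generalize (I4 t ltac:(lra)) (I5 t H); intros. assert (0 <= t ^ 3) by (apply pow_le; lra). nra. Qed.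
Lemma Dd_ge_ch2 t : 1 <= t -> ch t ^ 2 / 5 <= Dd t.
Proof. intro. generalize (I10 t H) (sh_half_ch t H) (ch_pos t); intros. nra. Qed.
Lemma Dd_le_ch2 t : 0 < t -> Dd t <= ch t ^ 2.
Proof. intro. unfold Dd. generalize (sh_le_ch t) (sh_pos t H) (ch_pos t); intros. nra. Qed.
Lemma Nn_le_tch t : 0 < t -> Nn t <= t * ch t.
Proof. intro. unfold Nn. generalize (sh_pos t H); lra. Qed.

Definition KG := 16384 * 750 + 10206.

Lemma G3_expr t : 0 < t -> Rabs (G3 t) * Th t ^ 2 =
   Rabs (Dd t - 2 * sh t ^ 3 * ch t) * (2 * Nn t ^ 2 / (ch t ^ 2 * Dd t ^ 3)).
Proof. intro Ht. generalize (sh_pos t Ht) (ch_pos t) (Dd_pos t Ht); intros.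
  rewrite <- (Rabs_pos_eq (Th t ^ 2)) by (apply pow2_ge_0).
  rewrite <- Rabs_mult. rewrite <- (Rabs_pos_eq (2 * Nn t ^ 2 / (ch t ^ 2 * Dd t ^ 3))).
  rewrite <- Rabs_mult. rewrite <- Rabs_Ropp. f_equal. rewrite Th_Nn by auto. unfold G3. field. lra.
  apply Rdiv_le_0_compat. generalize (pow2_ge_0 (Nn t)); lra. apply Rmult_lt_0_compat; apply pow_lt; lra.
Qed.

Lemma G3_bound t : 0 < t -> Rabs (G3 t) * Th t ^ 2 * exp (3 * t / 2) <= KG.
Proof. intro Ht. rewrite G3_expr by auto.
  generalize (sh_pos t Ht) (ch_pos t) (Dd_pos t Ht) (Nn_pos t Ht) (ch_ge1 t) (exp_pos (3*t/2)); intros Hs Hc HD HN Hc1 He.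
  assert (Habs : Rabs (Dd t - 2 * sh t ^ 3 * ch t) <= Dd t + 2 * sh t ^ 3 * ch t).
  { apply Rabs_le. assert (0 <= sh t ^ 3 * ch t) by (apply Rmult_le_pos; [apply pow_le|]; lra). lra. }
  assert (Hsc : 0 <= sh t ^ 3 * ch t) by (apply Rmult_le_pos; [apply pow_le|]; lra).
  assert (HW : 0 <= 2 * Nn t ^ 2 / (ch t ^ 2 * Dd t ^ 3)).
  { apply Rdiv_le_0_compat. generalize (pow2_ge_0 (Nn t)); lra. apply Rmult_lt_0_compat; apply pow_lt; lra. }
  assert (H1 : Rabs (Dd t - 2 * sh t ^ 3 * ch t) * (2 * Nn t ^ 2 / (ch t ^ 2 * Dd t ^ 3)) <=
     2 * (Dd t + 2 * sh t ^ 3 * ch t) * Nn t ^ 2 / (ch t ^ 2 * Dd t ^ 3)).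
  { replace (2 * (Dd t + 2 * sh t ^ 3 * ch t) * Nn t ^ 2 / (ch t ^ 2 * Dd t ^ 3)) with
     ((Dd t + 2 * sh t ^ 3 * ch t) * (2 * Nn t ^ 2 / (ch t ^ 2 * Dd t ^ 3))) by (field; lra).
    apply Rmult_le_compat_r; auto. }
  assert (Hx0 : 0 <= 2 * (Dd t + 2 * sh t ^ 3 * ch t) * Nn t ^ 2).
  { assert (0 <= sh t ^ 3 * ch t) by (apply Rmult_le_pos; [apply pow_le|]; lra).
    apply Rmult_le_pos; [lra| apply pow2_ge_0]. }
  destruct (Rle_dec t 1) as [Hsm|Hlg].
  -
    assert (HA : Dd t + 2 * sh t ^ 3 * ch t <= 168 * t ^ 3).
    { generalize (I6 t ltac:(lra)) (ple _ _ 3 (conj (sh_ge0 t ltac:(lra)) (sh_le3t t ltac:(lra)))) (I5 t ltac:(lra)); intros.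
      assert (sh t ^ 3 * ch t <= (3 * t) ^ 3 * 3) by (apply mle; split; try lra; apply pow_le; lra).
      simpl in *. lra. }
    assert (HN2 : Nn t ^ 2 <= (t ^ 3) ^ 2) by (apply ple; split; [lra| apply Nn_le; lra]).
    assert (HY : (2 * t ^ 3 / 3) ^ 3 <= ch t ^ 2 * Dd t ^ 3).
    { rewrite <- (Rmult_1_l ((2 * t ^ 3 / 3) ^ 3)). apply mle. split; [lra|]. nra.
      split. apply pow_le. assert (0 < t ^ 3) by (apply pow_lt; lra). lra. apply ple. split.
      assert (0 < t ^ 3) by (apply pow_lt; lra). lra. apply I3; lra. }
    assert (H2 : 2 * (Dd t + 2 * sh t ^ 3 * ch t) * Nn t ^ 2 / (ch t ^ 2 * Dd t ^ 3) <=
        2 * (168 * t ^ 3) * (t ^ 3) ^ 2 / (2 * t ^ 3 / 3) ^ 3).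
    { apply frac_le. split; auto.
      apply mle. split. lra. lra. split. apply pow2_ge_0. auto.
      split; auto. apply pow_lt. assert (0 < t ^ 3) by (apply pow_lt; lra). lra. }
    replace (2 * (168 * t ^ 3) * (t ^ 3) ^ 2 / (2 * t ^ 3 / 3) ^ 3) with 1134 in H2 by (field; lra).
    generalize (exp_small t Hsm); intro. unfold KG.
    assert (0 <= Rabs (Dd t - 2 * sh t ^ 3 * ch t) * (2 * Nn t ^ 2 / (ch t ^ 2 * Dd t ^ 3))) by (apply Rmult_le_pos; auto; apply Rabs_pos).
    nra.
  -
    assert (Ht1 : 1 <= t) by lra.
    generalize (sh_le_ch t) (Dd_ge_ch2 t Ht1) (Dd_le_ch2 t Ht) (Nn_le_tch t Ht); intros Q1 Q2 Q3 Q4.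
    assert (HA : Dd t + 2 * sh t ^ 3 * ch t <= 3 * ch t ^ 4).
    { assert (sh t ^ 3 * ch t <= ch t ^ 3 * ch t) by (apply mle; split; try lra; [apply pow_le; lra| apply ple; lra]).
      assert (ch t ^ 2 <= ch t ^ 4). { assert (1 <= ch t ^ 2) by nra. replace (ch t ^ 4) with (ch t ^ 2 * ch t ^ 2) by ring. nra. }
      assert (ch t ^ 3 * ch t = ch t ^ 4) by ring. lra. }
    assert (HN2 : Nn t ^ 2 <= (t * ch t) ^ 2) by (apply ple; lra).
    assert (HY : ch t ^ 2 * (ch t ^ 2 / 5) ^ 3 <= ch t ^ 2 * Dd t ^ 3).
    { apply Rmult_le_compat_l. apply pow2_ge_0. apply ple. split; auto. apply Rdiv_le_0_compat; [apply pow2_ge_0|lra]. }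
    assert (H2 : 2 * (Dd t + 2 * sh t ^ 3 * ch t) * Nn t ^ 2 / (ch t ^ 2 * Dd t ^ 3) <=
        2 * (3 * ch t ^ 4) * (t * ch t) ^ 2 / (ch t ^ 2 * (ch t ^ 2 / 5) ^ 3)).
    { apply frac_le. split; auto.
      apply mle. split. lra. lra. split. apply pow2_ge_0. auto.
      split; auto. apply Rmult_lt_0_compat. apply pow_lt; lra. apply pow_lt. apply Rdiv_lt_0_compat; [apply pow_lt|]; lra. }
    replace (2 * (3 * ch t ^ 4) * (t * ch t) ^ 2 / (ch t ^ 2 * (ch t ^ 2 / 5) ^ 3)) with (750 * (t ^ 2 / ch t ^ 2)) in H2 by (field; lra).
    assert (t ^ 2 / ch t ^ 2 <= t ^ 3 / ch t ^ 2).
    { unfold Rdiv. apply Rmult_le_compat_r. left; apply Rinv_0_lt_compat, pow_lt; lra. simpl; nra. }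
    generalize (large_fin t Ht1); intro. unfold KG.
    assert (0 <= Rabs (Dd t - 2 * sh t ^ 3 * ch t) * (2 * Nn t ^ 2 / (ch t ^ 2 * Dd t ^ 3))) by (apply Rmult_le_pos; auto; apply Rabs_pos).
    assert (0 <= t ^ 3 / ch t ^ 2) by (apply Rdiv_le_0_compat; [apply pow_le; lra| apply pow_lt; lra]).
    nra.
Qed.

Definition KJ := 16384 * 2875 + 30254.

Lemma J2_bound t : 0 < t -> Rabs (J2 t) * Th t ^ 2 * exp (3 * t / 2) <= KJ.
Proof. intro Ht.
  generalize (sh_pos t Ht) (ch_pos t) (Dd_pos t Ht) (Nn_pos t Ht) (ch_ge1 t) (exp_pos (3*t/2)); intros Hs Hc HD HN Hc1 He.
  set (P := - Ee t).
  assert (HP : 0 <= P) by (unfold P; generalize (I7 t ltac:(lra)); lra).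
  set (T1 := P * Nn t ^ 2 / (2 * ch t ^ 2 * Dd t ^ 3)).
  set (T2 := 2 * t * sh t ^ 2 * Nn t ^ 2 / Dd t ^ 3).
  set (T3 := 2 * sh t ^ 3 * P * Nn t ^ 2 / (ch t * Dd t ^ 4)).
  assert (HN2 : 0 <= Nn t ^ 2) by apply pow2_ge_0.
  assert (HD3 : 0 < Dd t ^ 3) by (apply pow_lt; lra).
  assert (HD4 : 0 < Dd t ^ 4) by (apply pow_lt; lra).
  assert (Hs2 : 0 < sh t ^ 2) by (apply pow_lt; lra).
  assert (Hs3 : 0 < sh t ^ 3) by (apply pow_lt; lra).
  assert (Hc2 : 0 < ch t ^ 2) by (apply pow_lt; lra).
  assert (X1 : 0 <= P * Nn t ^ 2) by (apply Rmult_le_pos; lra).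
  assert (X2 : 0 <= 2 * t * sh t ^ 2 * Nn t ^ 2) by (apply Rmult_le_pos; [|lra]; apply Rmult_le_pos; lra).
  assert (X3 : 0 <= 2 * sh t ^ 3 * P * Nn t ^ 2) by (apply Rmult_le_pos; [|lra]; apply Rmult_le_pos; [|lra]; lra).
  assert (P1 : 0 <= T1) by (unfold T1; apply Rdiv_le_0_compat; [lra|]; apply Rmult_lt_0_compat; lra).
  assert (P2 : 0 <= T2) by (unfold T2; apply Rdiv_le_0_compat; lra).
  assert (P3 : 0 <= T3) by (unfold T3; apply Rdiv_le_0_compat; [lra|]; apply Rmult_lt_0_compat; lra).
  assert (Hexpr : J2 t * Th t ^ 2 = - T1 - T2 + T3).
  { rewrite Th_Nn by auto. unfold J2, T1, T2, T3, P. field. lra. }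
  assert (Habs : Rabs (J2 t) * Th t ^ 2 <= T1 + T2 + T3).
  { rewrite <- (Rabs_pos_eq (Th t ^ 2)) by (apply pow2_ge_0). rewrite <- Rabs_mult, Hexpr.
    apply Rabs_le. lra. }
  assert (HR : 0 <= Rabs (J2 t) * Th t ^ 2) by (apply Rmult_le_pos; [apply Rabs_pos| apply pow2_ge_0]).
  destruct (Rle_dec t 1) as [Hsm|Hlg].
  - assert (Hm : 0 < 2 * t ^ 3 / 3) by (assert (0 < t ^ 3) by (apply pow_lt; lra); lra).
    assert (HD' : 2 * t ^ 3 / 3 <= Dd t) by (apply I3; lra).
    assert (HPs : P <= 12 * t ^ 3) by (unfold P; apply I8; lra).
    assert (HNs : Nn t ^ 2 <= (t ^ 3) ^ 2) by (apply ple; split; [lra| apply Nn_le; lra]).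
    assert (Hsh : 0 <= sh t <= 3 * t) by (split; [lra| apply sh_le3t; lra]).
    assert (Hsh2 : sh t ^ 2 <= (3 * t) ^ 2) by (apply ple; auto).
    assert (Hsh3 : sh t ^ 3 <= (3 * t) ^ 3) by (apply ple; auto).
    assert (Hm3 : (2 * t ^ 3 / 3) ^ 3 <= Dd t ^ 3) by (apply ple; lra).
    assert (Hm4 : (2 * t ^ 3 / 3) ^ 4 <= Dd t ^ 4) by (apply ple; lra).
    assert (Hm3p : 0 < (2 * t ^ 3 / 3) ^ 3) by (apply pow_lt; lra).
    assert (Hm4p : 0 < (2 * t ^ 3 / 3) ^ 4) by (apply pow_lt; lra).
    assert (B1 : T1 <= 12 * t ^ 3 * (t ^ 3) ^ 2 / (2 * 1 * (2 * t ^ 3 / 3) ^ 3)).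
    { apply frac_le. split; auto. apply mle; lra.
      split. lra. apply Rmult_le_compat. lra. lra. nra. auto. }
    assert (B2 : T2 <= 2 * t * (3 * t) ^ 2 * (t ^ 3) ^ 2 / (2 * t ^ 3 / 3) ^ 3).
    { apply frac_le. split; auto. apply mle; [|lra]. split. apply Rmult_le_pos; lra.
      apply Rmult_le_compat_l; lra. lra. }
    assert (B3 : T3 <= 2 * (3 * t) ^ 3 * (12 * t ^ 3) * (t ^ 3) ^ 2 / (1 * (2 * t ^ 3 / 3) ^ 4)).
    { apply frac_le. split; auto. apply mle; [|lra]. split. apply Rmult_le_pos; lra.
      apply mle; [|lra]. split; lra.
      split. lra. apply Rmult_le_compat; lra. }
    replace (12 * t ^ 3 * (t ^ 3) ^ 2 / (2 * 1 * (2 * t ^ 3 / 3) ^ 3)) with (81/4) in B1 by (field; lra).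
    replace (2 * t * (3 * t) ^ 2 * (t ^ 3) ^ 2 / (2 * t ^ 3 / 3) ^ 3) with (243/4) in B2 by (field; lra).
    replace (2 * (3 * t) ^ 3 * (12 * t ^ 3) * (t ^ 3) ^ 2 / (1 * (2 * t ^ 3 / 3) ^ 4)) with (6561/2) in B3 by (field; lra).
    generalize (exp_small t Hsm); intro. unfold KJ. nra.
  - assert (Ht1 : 1 <= t) by lra.
    generalize (sh_le_ch t) (Dd_ge_ch2 t Ht1) (Nn_le_tch t Ht) (I9 t ltac:(lra)); intros Q1 Q2 Q4 Q5.
    fold P in Q5.
    assert (Hq : 0 < ch t ^ 2 / 5) by (apply Rdiv_lt_0_compat; lra).
    assert (HNs : Nn t ^ 2 <= (t * ch t) ^ 2) by (apply ple; lra).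
    assert (Hsh2 : sh t ^ 2 <= ch t ^ 2) by (apply ple; lra).
    assert (Hsh3 : sh t ^ 3 <= ch t ^ 3) by (apply ple; lra).
    assert (Hm3 : (ch t ^ 2 / 5) ^ 3 <= Dd t ^ 3) by (apply ple; lra).
    assert (Hm4 : (ch t ^ 2 / 5) ^ 4 <= Dd t ^ 4) by (apply ple; lra).
    assert (Hm3p : 0 < (ch t ^ 2 / 5) ^ 3) by (apply pow_lt; lra).
    assert (Hm4p : 0 < (ch t ^ 2 / 5) ^ 4) by (apply pow_lt; lra).
    assert (B1 : T1 <= 2 * t * ch t ^ 2 * (t * ch t) ^ 2 / (2 * ch t ^ 2 * (ch t ^ 2 / 5) ^ 3)).
    { apply frac_le. split; auto. apply mle; lra.
      split. apply Rmult_lt_0_compat; lra. apply Rmult_le_compat_l; lra. }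
    assert (B2 : T2 <= 2 * t * ch t ^ 2 * (t * ch t) ^ 2 / (ch t ^ 2 / 5) ^ 3).
    { apply frac_le. split; auto. apply mle; [|lra]. split. apply Rmult_le_pos; lra.
      apply Rmult_le_compat_l; lra. lra. }
    assert (B3 : T3 <= 2 * ch t ^ 3 * (2 * t * ch t ^ 2) * (t * ch t) ^ 2 / (ch t * (ch t ^ 2 / 5) ^ 4)).
    { apply frac_le. split; auto. apply mle; [|lra]. split. apply Rmult_le_pos; lra.
      apply mle; [|lra]. split; lra.
      split. apply Rmult_lt_0_compat; lra. apply Rmult_le_compat_l; lra. }
    replace (2 * t * ch t ^ 2 * (t * ch t) ^ 2 / (2 * ch t ^ 2 * (ch t ^ 2 / 5) ^ 3)) with (125 * (t ^ 3 / ch t ^ 2) / ch t ^ 2) in B1 by (field; lra).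
    replace (2 * t * ch t ^ 2 * (t * ch t) ^ 2 / (ch t ^ 2 / 5) ^ 3) with (250 * (t ^ 3 / ch t ^ 2)) in B2 by (field; lra).
    replace (2 * ch t ^ 3 * (2 * t * ch t ^ 2) * (t * ch t) ^ 2 / (ch t * (ch t ^ 2 / 5) ^ 4)) with (2500 * (t ^ 3 / ch t ^ 2)) in B3 by (field; lra).
    assert (Hq3 : 0 <= t ^ 3 / ch t ^ 2) by (apply Rdiv_le_0_compat; [apply pow_le; lra| lra]).
    assert (125 * (t ^ 3 / ch t ^ 2) / ch t ^ 2 <= 125 * (t ^ 3 / ch t ^ 2)).
    { assert (1 <= ch t ^ 2) by nra. set (a := 125 * (t ^ 3 / ch t ^ 2)).
      assert (0 <= a) by (unfold a; lra).
      apply Rmult_le_reg_r with (ch t ^ 2); [lra|]. unfold Rdiv. rewrite Rmult_assoc, Rinv_l by lra. nra. }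
    generalize (large_fin t Ht1); intro. unfold KJ. nra.
Qed.

Definition btw a y x := Rmin a y <= x <= Rmax a y.

Lemma btw_abs a y x : btw a y x -> Rabs (x - a) <= Rabs (y - a).
Proof. unfold btw. intros. destruct (Rle_dec a y).
  - rewrite Rmin_left, Rmax_right in H by lra. rewrite !Rabs_pos_eq; lra.
  - rewrite Rmin_right, Rmax_left in H by lra. rewrite !Rabs_left1; lra.
Qed.

Lemma btw_sub a y z x : btw a y z -> btw a z x -> btw a y x.
Proof. unfold btw, Rmin, Rmax. intros. repeat destruct Rle_dec; lra. Qed.

Lemma mvt_bound (h h' : R -> R) a y K n : 0 <= K ->
  (forall x, btw a y x -> is_derive h x (h' x) /\ Rabs (h' x) <= K * Rabs (x - a) ^ n) ->
  Rabs (h y - h a) <= K * Rabs (y - a) ^ (S n).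
Proof. intros HK H.
  destruct (MVT_gen h a y h') as [c [Hc Heq]].
  - intros x Hx. apply H. unfold btw; lra.
  - intros x Hx. apply (cont_of_der h h'). apply H; auto.
  - rewrite Heq, Rabs_mult. destruct (H c Hc) as [_ Hb].
    assert (Rabs (c - a) ^ n <= Rabs (y - a) ^ n) by (apply pow_incr; split; [apply Rabs_pos| apply btw_abs; auto]).
    simpl. rewrite (Rmult_comm (Rabs (y - a))). rewrite <- Rmult_assoc.
    apply Rmult_le_compat_r. apply Rabs_pos.
    apply Rle_trans with (1 := Hb). apply Rmult_le_compat_l; auto.
Qed.

Lemma d_aff1 (g : R -> R) g' x a c0 c1 : is_derive g x g' ->
  is_derive (fun z => g z - c0 - (z - a) * c1) x (g' - c1).
Proof. intro Hg. assert (ex_derive g x) by (eexists; eauto).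
  auto_derive. auto. replace (Derive (fun z : R => g z) x) with (g' : R) by (symmetry; apply is_derive_unique; auto). Req. ring. Qed.

Lemma d_aff2 (g : R -> R) g' x a c0 c1 c2 : is_derive g x g' ->
  is_derive (fun z => g z - c0 - (z - a) * c1 - (z - a) ^ 2 / 2 * c2) x (g' - c1 - (x - a) * c2).
Proof. intro Hg. assert (ex_derive g x) by (eexists; eauto).
  auto_derive. auto. replace (Derive (fun z : R => g z) x) with (g' : R) by (symmetry; apply is_derive_unique; auto). Req. field. Qed.

Lemma d_aff0 (g : R -> R) g' x c0 : is_derive g x g' ->
  is_derive (fun z => g z - c0) x (g' - 0).
Proof. intro Hg. assert (ex_derive g x) by (eexists; eauto).
  auto_derive. auto. replace (Derive (fun z : R => g z) x) with (g' : R) by (symmetry; apply is_derive_unique; auto). Req. ring. Qed.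

Lemma pt_bound (Q : R -> R) K th x : 0 < th -> 2 * th / 3 <= x ->
  (forall t, 0 < t -> Rabs (Q t) * Th t ^ 2 * exp (3 * t / 2) <= K) ->
  Rabs (Q (T x)) <= K * (9 / 4) * / th ^ 2 * exp (- th).
Proof. intros Hth Hx HK.
  assert (Hx0 : 0 < x) by lra.
  generalize (HK (T x) (T_pos x Hx0)). rewrite ThT by auto. intro H.
  generalize (T_ge x Hx0); intro HT.
  assert (He : exp th <= exp (3 * T x / 2)).
  { destruct (Req_dec th (3 * T x / 2)). rewrite H0; lra. left; apply exp_increasing; lra. }
  assert (Hx2 : 4 * th ^ 2 / 9 <= x ^ 2) by nra.
  assert (0 < th ^ 2) by (apply pow_lt; lra).
  generalize (exp_pos th) (Rabs_pos (Q (T x))); intros.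
  rewrite exp_Ropp.
  assert (Rabs (Q (T x)) * (4 * th ^ 2 / 9) * exp th <= K).
  { apply Rle_trans with (2 := H). apply Rmult_le_compat; try nra. }
  apply Rmult_le_reg_r with (th ^ 2 * exp th). nra.
  replace (K * (9 / 4) * / th ^ 2 * / exp th * (th ^ 2 * exp th)) with (K * (9/4)) by (field; lra).
  nra.
Qed.

Theorem lemma3 :
  exists C : R, 0 < C /\
    forall theta delta : R, 0 < theta -> Rabs delta <= theta / 3 ->
      Rabs (ff (theta + delta) - ff theta - delta * Derive ff theta
            - delta ^ 2 / 2 * Derive (Derive ff) theta)
        <= C * / theta ^ 2 * Rabs delta ^ 3 * exp (- theta)
      /\
      Rabs (jj (theta + delta) - jj theta - delta * Derive jj theta)
        <= C * / theta ^ 2 * delta ^ 2 * exp (- theta).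
Proof.
  exists ((KG + KJ) * (9 / 4)). split. unfold KG, KJ; lra.
  intros th d Hth Hd.
  set (y := th + d).
  assert (Hin : forall x, btw th y x -> 2 * th / 3 <= x).
  { intros x Hx. unfold btw, y in *. apply Rabs_le_between in Hd. destruct (Rle_dec th (th + d)).
    rewrite Rmin_left in Hx by lra. lra. rewrite Rmin_right in Hx by lra. lra. }
  assert (Hpos : forall x, btw th y x -> 0 < x) by (intros x Hx; generalize (Hin x Hx); lra).
  assert (Hth2 : 0 < / th ^ 2) by (apply Rinv_0_lt_compat, pow_lt; lra).
  assert (Hex : 0 < exp (- th)) by apply exp_pos.
  set (MG := KG * (9 / 4) * / th ^ 2 * exp (- th)).
  set (MJ := KJ * (9 / 4) * / th ^ 2 * exp (- th)).
  assert (HMG : 0 <= MG) by (unfold MG, KG; apply Rmult_le_pos; [|lra]; apply Rmult_le_pos; lra).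
  assert (HMJ : 0 <= MJ) by (unfold MJ, KJ; apply Rmult_le_pos; [|lra]; apply Rmult_le_pos; lra).
  assert (Hd' : d = y - th) by (unfold y; ring).
  split.
  -
    assert (S2 : forall z, btw th y z -> Rabs ((Derive (Derive ff) z - Derive (Derive ff) th) - (Derive (Derive ff) th - Derive (Derive ff) th)) <= MG * Rabs (z - th) ^ 1).
    { intros z Hz. apply (mvt_bound (fun x => Derive (Derive ff) x - Derive (Derive ff) th) (fun x => G3 (T x) - 0)); auto.
      intros x Hx. assert (Hxy := btw_sub _ _ _ _ Hz Hx). split.
      - apply d_aff0. apply d_DDff. auto.
      - rewrite Rminus_0_r. rewrite pow_O, Rmult_1_r. apply pt_bound; auto. apply G3_bound. }
    assert (S1 : forall z, btw th y z -> Rabs ((Derive ff z - Derive ff th - (z - th) * Derive (Derive ff) th) - (Derive ff th - Derive ff th - (th - th) * Derive (Derive ff) th)) <= MG * Rabs (z - th) ^ 2).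
    { intros z Hz. apply (mvt_bound (fun x => Derive ff x - Derive ff th - (x - th) * Derive (Derive ff) th) (fun x => Derive (Derive ff) x - Derive (Derive ff) th)); auto.
      intros x Hx. assert (Hxy := btw_sub _ _ _ _ Hz Hx). split.
      - apply d_aff1. rewrite (DDff x) by (apply Hpos; auto). apply d_Dff. apply Hpos; auto.
      - generalize (S2 x Hxy). replace (Derive (Derive ff) x - Derive (Derive ff) th - (Derive (Derive ff) th - Derive (Derive ff) th)) with (Derive (Derive ff) x - Derive (Derive ff) th) by ring. auto. }
    assert (S0 := mvt_bound (fun x => ff x - ff th - (x - th) * Derive ff th - (x - th) ^ 2 / 2 * Derive (Derive ff) th)
       (fun x => Derive ff x - Derive ff th - (x - th) * Derive (Derive ff) th) th y MG 2 HMG).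
    cbv beta in S0.
    replace (ff th - ff th - (th - th) * Derive ff th - (th - th) ^ 2 / 2 * Derive (Derive ff) th) with 0 in S0 by field.
    rewrite Rminus_0_r in S0. rewrite Hd'.
    apply Rle_trans with (MG * Rabs (y - th) ^ 3).
    + apply S0. intros x Hx. split.
      * apply d_aff2. rewrite (Dff x) by (apply Hpos; auto). apply d_ff. apply Hpos; auto.
      * generalize (S1 x Hx). replace (Derive ff x - Derive ff th - (x - th) * Derive (Derive ff) th -
            (Derive ff th - Derive ff th - (th - th) * Derive (Derive ff) th)) with
            (Derive ff x - Derive ff th - (x - th) * Derive (Derive ff) th) by ring. auto.
    + unfold MG. assert (0 <= Rabs (y - th) ^ 3) by (apply pow_le, Rabs_pos).
      assert (KG * (9/4) <= (KG + KJ) * (9/4)) by (unfold KG, KJ; lra).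
      replace (KG * (9 / 4) * / th ^ 2 * exp (- th) * Rabs (y - th) ^ 3) with ((KG * (9/4)) * (/ th ^ 2 * Rabs (y - th) ^ 3 * exp (- th))) by ring.
      replace ((KG + KJ) * (9 / 4) * / th ^ 2 * Rabs (y - th) ^ 3 * exp (- th)) with (((KG + KJ) * (9/4)) * (/ th ^ 2 * Rabs (y - th) ^ 3 * exp (- th))) by ring.
      apply Rmult_le_compat_r; auto. apply Rmult_le_pos; [apply Rmult_le_pos|]; lra.
  -
    assert (S2 : forall z, btw th y z -> Rabs ((Derive jj z - Derive jj th) - (Derive jj th - Derive jj th)) <= MJ * Rabs (z - th) ^ 1).
    { intros z Hz. apply (mvt_bound (fun x => Derive jj x - Derive jj th) (fun x => J2 (T x) - 0)); auto.
      intros x Hx. assert (Hxy := btw_sub _ _ _ _ Hz Hx). split.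
      - apply d_aff0. apply d_Djj. auto.
      - rewrite Rminus_0_r. rewrite pow_O, Rmult_1_r. apply pt_bound; auto. apply J2_bound. }
    assert (S0 := mvt_bound (fun x => jj x - jj th - (x - th) * Derive jj th)
       (fun x => Derive jj x - Derive jj th) th y MJ 1 HMJ).
    cbv beta in S0.
    replace (jj th - jj th - (th - th) * Derive jj th) with 0 in S0 by ring.
    rewrite Rminus_0_r in S0. rewrite Hd'.
    apply Rle_trans with (MJ * Rabs (y - th) ^ 2).
    + apply S0. intros x Hx. split.
      * apply d_aff1. rewrite (Djj x) by (apply Hpos; auto). apply d_jj. apply Hpos; auto.
      * generalize (S2 x Hx). replace (Derive jj x - Derive jj th - (Derive jj th - Derive jj th)) with (Derive jj x - Derive jj th) by ring. auto.
    + unfold MJ. rewrite pow2_abs.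
      assert (0 <= (y - th) ^ 2) by apply pow2_ge_0.
      replace (KJ * (9 / 4) * / th ^ 2 * exp (- th) * (y - th) ^ 2) with ((KJ * (9/4)) * (/ th ^ 2 * (y - th) ^ 2 * exp (- th))) by ring.
      replace ((KG + KJ) * (9 / 4) * / th ^ 2 * (y - th) ^ 2 * exp (- th)) with (((KG + KJ) * (9/4)) * (/ th ^ 2 * (y - th) ^ 2 * exp (- th))) by ring.
      apply Rmult_le_compat_r. apply Rmult_le_pos; [apply Rmult_le_pos|]; lra. unfold KG, KJ; lra.
Qed.
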